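(* Let $E\ge0$ be an integer and let $\mathbf a=(a_1,\dots,a_m)$ be a partition. Then there exists a partition $\mathbf e=(e_1,\dots,e_{m-1})$ such that $\sum_{i=1}^{m-1}e_i=E$ and $\mathbf a\prec'\mathbf e$ if and only if $$E=\sum_{i=2}^m a_i\quad\text{or}\quad E\ge a_1+\sum_{i=3}^m a_i.$$
   Context: A partition is a nonincreasing finite sequence of nonnegative integers. 1-step generalized majorization: for nonincreasing integer sequences $\mathbf a=(a_1,\dots,a_m)$ and $\mathbf e=(e_1,\dots,e_{m-1})$, set $e_m=-\infty$ and $h=\min\{i: e_i<a_i\}$; then $\mathbf a\prec'\mathbf e$ means $e_i=a_{i+1}$ for all $h\le i\le m-1$. Empty sums are $0$. *)

(* Defs.v *)
From mathcomp Require Import all_boot.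
Set Implicit Arguments. Unset Strict Implicit. Unset Printing Implicit Defensive.

(* Sequences are 0-indexed: paper's a_i is [nth 0 a (i-1)].
   A partition is a nonincreasing [seq nat]: [sorted geq a]. *)

(* The index h (0-based) = min{ i : e_i < a_i }, with e_m = -oo, i.e. the
   last position (size a).-1 always qualifies. *)
Definition gm_h (a e : seq nat) : nat :=
  find (fun i => (i == (size a).-1) || (nth 0 e i < nth 0 a i))
       (iota 0 (size a)).

Definition gmaj1 (a e : seq nat) : Prop :=
  forall i, gm_h a e <= i -> i < (size a).-1 -> nth 0 e i = nth 0 a i.+1.

(* Main.v *)
Require Import Defs.
From mathcomp Require Import all_boot.
From mathcomp Require Import zify.

Lemma sum_le_nth (s t : seq nat) : size t = size s ->
  (forall i, i < size s -> nth 0 s i <= nth 0 t i) -> sumn s <= sumn t.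
Proof.
elim: s t => [|x s IH] [|y t] //= [st] H.
apply: leq_add; first exact: (H 0).
apply: IH => // i lti; exact: (H i.+1).
Qed.

Theorem lemma5p2 (E : nat) (a : seq nat) :
  2 <= size a -> sorted geq a ->
  (exists e : seq nat,
      [/\ size e = (size a).-1, sorted geq e, sumn e = E & gmaj1 a e])
  <->
  (E = sumn (behead a) \/ nth 0 a 0 + sumn (drop 2 a) <= E).
Proof.
case: a => [|x [|y s]] //= _ sa; split.
- move=> [e [se so sE hg]].
  have hgE : forall i, gm_h [:: x, y & s] e <= i -> i < (size s).+1 ->
      nth 0 e i = nth 0 [:: x, y & s] i.+1 by exact: hg.
  case h0: (gm_h [:: x, y & s] e == 0).
  + left; rewrite -sE.
    have -> : e = y :: s; last by [].
    apply: (eq_from_nth (x0:=0)); first by rewrite se.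
    move=> i; rewrite se => lti; apply: hgE => //; by rewrite (eqP h0).
  + right.
    have key : forall i, i < gm_h [:: x, y & s] e ->
        nth 0 [:: x, y & s] i <= nth 0 e i.
      move=> i lti.
      have hs : gm_h [:: x, y & s] e <= size [:: x, y & s].
        by rewrite /gm_h -[X in _ <= X](size_iota 0); apply: find_size.
      have := before_find 0 lti; rewrite nth_iota; last first.
        by apply: leq_trans hs.
      by rewrite add0n => /norP [_]; rewrite -leqNgt.
    case: e se so sE hg hgE key h0 => [|f t] //= [st] so sE hg hgE key h0.
    rewrite -sE; apply: leq_add.
      by have := key 0; rewrite lt0n h0 /=; apply.
    apply: sum_le_nth; first by rewrite drop0.
    rewrite drop0 => i lti.
    case: (ltnP i.+1 (gm_h [:: x, y & s] (f :: t))) => hi.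
    * have := key _ hi => /=.
      apply: leq_trans.
      have tr : transitive geq by move=> p q r h1 h2; apply: leq_trans h2 h1.
      have := @sorted_leq_nth _ geq tr (fun n => leqnn n) 0 [:: x, y & s] sa.
      move=> /(_ i.+1 i.+2); rewrite !inE /=; apply => //; lia.
    * by have := hgE _ hi; rewrite /= ltnS => ->.
- case=> [->|hE].
  + exists (y :: s); split => //; first by case/andP: sa.
    all: try by move=> i _ _; rewrite nth_behead.
  + exists ((E - sumn s) :: s); split => //.
    * case: s sa hE => [|z s'] //= /and3P [h1 h2 h3] hE.
      rewrite h3 andbT. lia.
    * move: hE => /= hE; rewrite drop0 in hE; rewrite /=; lia.
    * move=> [|j] /=; last by [].
      rewrite /gm_h /= ifF //.
      apply/negbTE; move: hE => /= hE; rewrite drop0 in hE; rewrite -leqNgt; lia.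
Qed.
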